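(* Let $t,t'\in B_n$ with $t\neq t'$ and let $G$ be a digraph such that $\mathbb{A}(G)$ satisfies $t\approx t'$. Then $E_G\le L_{t,t'}+1$.
   Context: Digraphs $G=(V,E)$ have $E\subseteq V\times V$, loops allowed, possibly infinite. $\mathbb{A}(G)$ is the groupoid on $V\cup\{\infty\}$ with $xy=x$ if $x,y\in V$, $(x,y)\in E$, and $xy=\infty$ otherwise. $B_n$: binary terms with $x_1,\dots,x_n$ each occurring once in this order; $G(t)$: rooted tree defined by $G(x_i)$ a single vertex and $G(t_1t_2)=G(t_1)\cup G(t_2)$ plus an edge from the leftmost variable of $t_1$ to that of $t_2$; root $x_1$. With $T=G(t)$, $T'=G(t')$ and depth $d_T$: $L_{t,t'}$ is the largest integer $m$ such that for all $x$, if $d_T(x)\le m$ or $d_{T'}(x)\le m$ then $d_T(x)=d_{T'}(x)$. A strongly connected component (SCC) is trivial if it is a single vertex without a loop, nontrivial otherwise. A path $v_0\to\dots\to v_\ell$ is an entryway to a nontrivial SCC $K$ if $v_0,\dots,v_{\ell-1}$ lie in trivial SCCs and $v_\ell\in K$. $E_G$ is the maximal length of an entryway ($\infty$ if unbounded, $-\infty$ if none). *)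

(* Defs.v *)
From mathcomp Require Import all_boot.
Set Implicit Arguments. Unset Strict Implicit. Unset Printing Implicit Defensive.

Inductive term : Type := Var of nat | App of term & term.

Fixpoint leaves (t : term) : seq nat :=
  match t with Var i => [:: i] | App t1 t2 => leaves t1 ++ leaves t2 end.

Definition inB (n : nat) (t : term) : Prop := leaves t = iota 1 n.

Fixpoint leftmost (t : term) : nat :=
  match t with Var i => i | App t1 _ => leftmost t1 end.

Fixpoint tedges (t : term) : seq (nat * nat) :=
  match t with
  | Var _ => [::]
  | App t1 t2 => (leftmost t1, leftmost t2) :: tedges t1 ++ tedges t2
  end.

Definition tdepth (t : term) (x k : nat) : Prop :=
  exists p : seq nat,
    [/\ path (fun u v => (u, v) \in tedges t) (leftmost t) p,
        last (leftmost t) p = x & size p = k].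

Definition Lprop (n : nat) (t t' : term) (m : nat) : Prop :=
  forall x, x \in iota 1 n -> forall k k', tdepth t x k -> tdepth t' x k' ->
    (k <= m \/ k' <= m) -> k = k'.

Definition is_L (n : nat) (t t' : term) (m : nat) : Prop :=
  Lprop n t t' m /\ forall m', Lprop n t t' m' -> m' <= m.

(* The groupoid A(G) on option V (None = infinity). *)
Definition Aop (V : Type) (E : V -> V -> bool) (x y : option V) : option V :=
  match x, y with
  | Some u, Some v => if E u v then Some u else None
  | _, _ => None
  end.

Fixpoint eval (V : Type) (E : V -> V -> bool) (a : nat -> option V) (t : term)
  : option V :=
  match t with
  | Var i => a i
  | App t1 t2 => Aop E (eval E a t1) (eval E a t2)
  end.

Definition satisfies (V : Type) (E : V -> V -> bool) (t t' : term) : Prop :=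
  forall a : nat -> option V, eval E a t = eval E a t'.

Inductive reach (V : Type) (E : V -> V -> bool) : V -> V -> Prop :=
  | reach_refl v : reach E v v
  | reach_step u v w : E u v -> reach E v w -> reach E u w.

Definition sconn (V : Type) (E : V -> V -> bool) (u v : V) : Prop :=
  reach E u v /\ reach E v u.

Definition in_trivial_scc (V : Type) (E : V -> V -> bool) (v : V) : Prop :=
  (forall w, sconn E v w -> w = v) /\ ~~ E v v.

(* v0 -> ... -> v_l (given as vs 0, ..., vs l) is an entryway of length l
   to a nontrivial SCC (the SCC of v_l). *)
Definition entryway (V : Type) (E : V -> V -> bool) (vs : nat -> V) (l : nat)
  : Prop :=
  [/\ forall i, i < l -> E (vs i) (vs i.+1),
      forall i, i < l -> in_trivial_scc E (vs i)
    & ~ in_trivial_scc E (vs l)].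

(* Main.v *)
Require Import Defs.
From mathcomp Require Import all_boot.
From mathcomp Require Import zify.
From Stdlib Require Import Classical ClassicalEpsilon.
Set Implicit Arguments. Unset Strict Implicit. Unset Printing Implicit Defensive.

Fixpoint dep (t : term) (y : nat) : nat :=
  match t with
  | Var _ => 0
  | App t1 t2 => if y \in leaves t2 then (dep t2 y).+1 else dep t1 y
  end.

Lemma leaves_lm t : exists r, leaves t = leftmost t :: r.
Proof.
elim: t => [i|t1 [r1 H1] t2 _] /=; first by exists [::].
by exists (r1 ++ leaves t2); rewrite H1.
Qed.

Lemma lm_in t : leftmost t \in leaves t.
Proof. by case: (leaves_lm t) => r ->; rewrite inE eqxx. Qed.

Lemma lm_eq t t' : leaves t = leaves t' -> leftmost t = leftmost t'.
Proof. by case: (leaves_lm t) (leaves_lm t') => r -> [r' ->] []. Qed.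

Lemma uniq_app t1 t2 : uniq (leaves (App t1 t2)) ->
  [/\ uniq (leaves t1), uniq (leaves t2) &
      forall y, y \in leaves t1 -> y \notin leaves t2].
Proof.
rewrite /= cat_uniq => /and3P [u1 hd u2]; split=> // y Hy.
apply/negP => Hy2; move/negP: hd; apply; apply/hasP; by exists y.
Qed.

Lemma dep0 t y : uniq (leaves t) -> y \in leaves t ->
  (dep t y == 0) = (y == leftmost t).
Proof.
elim: t => [i|t1 IH1 t2 IH2] /= U Hy.
  by move: Hy; rewrite inE => /eqP->; rewrite !eqxx.
case/uniq_app: U => U1 U2 D.
case: ifP => Hy2.
  apply/esym/negbTE/eqP => Ee; move: (D _ (lm_in t1)); by rewrite -Ee Hy2.
rewrite mem_cat Hy2 orbF in Hy; exact: IH1.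
Qed.

Lemma dep_lm t : uniq (leaves t) -> dep t (leftmost t) = 0.
Proof. by move=> U; apply/eqP; rewrite dep0 ?lm_in. Qed.

Lemma edge_in t u v : (u,v) \in tedges t -> (u \in leaves t) && (v \in leaves t).
Proof.
elim: t => [i|t1 IH1 t2 IH2] //=.
rewrite inE mem_cat => /orP [/eqP [-> ->]| /orP [/IH1 | /IH2]].
- by rewrite !mem_cat !lm_in orbT.
- by case/andP => H1 H2; rewrite !mem_cat H1 H2.
- by case/andP => H1 H2; rewrite !mem_cat H1 H2 !orbT.
Qed.

Lemma dep_edge t u v : uniq (leaves t) -> (u,v) \in tedges t ->
  dep t v = (dep t u).+1.
Proof.
elim: t => [i|t1 IH1 t2 IH2] //= U. case/uniq_app: (U) => U1 U2 D.
rewrite inE mem_cat => /orP [/eqP [-> ->]| /orP [H|H]].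
- by rewrite lm_in (negbTE (D _ (lm_in t1))) (dep_lm U1) (dep_lm U2).
- case/andP: (edge_in H) => Hu Hv.
  rewrite (negbTE (D _ Hu)) (negbTE (D _ Hv)); exact: IH1.
- case/andP: (edge_in H) => Hu Hv. by rewrite Hu Hv (IH2 U2 H).
Qed.

Lemma dep_path t u p : uniq (leaves t) ->
  path (fun a b => (a,b) \in tedges t) u p -> dep t (last u p) = dep t u + size p.
Proof.
move=> U; elim: p u => [|v p IH] u /=; first by rewrite addn0.
case/andP => H1 H2. by rewrite IH // (dep_edge U H1) addSnnS.
Qed.

Lemma tdepth_dep t x k : uniq (leaves t) -> tdepth t x k -> k = dep t x.
Proof.
move=> U [p [Hp Hl Hs]]. by rewrite -Hl (dep_path U Hp) Hs dep_lm.
Qed.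

Lemma dep_tdepth t x : uniq (leaves t) -> x \in leaves t -> tdepth t x (dep t x).
Proof.
elim: t => [i|t1 IH1 t2 IH2] U Hx.
  exists [::]; move: Hx; rewrite inE => /eqP ->; by split.
case/uniq_app: (U) => U1 U2 D. rewrite /=. case: ifP => Hx2.
  case: (IH2 U2 Hx2) => p [Hp Hl Hs]. exists (leftmost t2 :: p); split => /=.
  - rewrite inE eqxx /=. apply: (sub_path _ Hp) => a b H.
    by rewrite inE mem_cat H !orbT.
  - exact Hl.
  - by rewrite Hs.
have Hx1 : x \in leaves t1 by move: Hx; rewrite /= mem_cat Hx2 orbF.
case: (IH1 U1 Hx1) => p [Hp Hl Hs]. exists p; split => //.
apply: (sub_path _ Hp) => a b H /=; by rewrite inE mem_cat H orbT.
Qed.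

Lemma parent t x : uniq (leaves t) -> x \in leaves t -> x != leftmost t ->
  exists p, (p, x) \in tedges t.
Proof.
elim: t => [i|t1 IH1 t2 IH2] /= U Hx Hne.
  by move: Hx Hne; rewrite inE => /eqP ->; rewrite eqxx.
case/uniq_app: (U) => U1 U2 D. case: (boolP (x \in leaves t2)) => Hx2.
  case: (eqVneq x (leftmost t2)) => [->|Hne2].
    by exists (leftmost t1); rewrite inE eqxx.
  case: (IH2 U2 Hx2 Hne2) => p Hp; exists p; by rewrite inE mem_cat Hp !orbT.
have Hx1 : x \in leaves t1 by move: Hx; rewrite mem_cat (negbTE Hx2) orbF.
case: (IH1 U1 Hx1 Hne) => p Hp; exists p; by rewrite inE mem_cat Hp orbT.
Qed.

Lemma eval_some V (E : V -> V -> bool) a t z : eval E a t = Some z ->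
  a (leftmost t) = Some z /\ forall u v, (u,v) \in tedges t ->
    exists xu xv, [/\ a u = Some xu, a v = Some xv & E xu xv].
Proof.
elim: t z => [i|t1 IH1 t2 IH2] z /=.
  by move=> ->; split => // u v; rewrite in_nil.
case e1: (eval E a t1) => [z1|] //; case e2: (eval E a t2) => [z2|] //=.
case: ifP => // H [<-].
have [A1 B1] := IH1 _ e1; have [A2 B2] := IH2 _ e2.
split => // u v; rewrite inE mem_cat => /orP [/eqP [-> ->] | /orP [/B1|/B2]] //.
by exists z1, z2; split.
Qed.

Lemma eval_hom V (E : V -> V -> bool) (f : nat -> V) t :
  (forall u v, (u,v) \in tedges t -> E (f u) (f v)) ->
  eval E (fun y => Some (f y)) t = Some (f (leftmost t)).
Proof.
elim: t => [i|t1 IH1 t2 IH2] //= H.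
rewrite IH1 => [|u v Huv]; last by apply: H; rewrite inE mem_cat Huv orbT.
rewrite IH2 => [|u v Huv]; last by apply: H; rewrite inE mem_cat Huv !orbT.
by rewrite /= H // inE eqxx.
Qed.

Section Reach.
Variables (V : Type) (E : V -> V -> bool).

Lemma reach_trans a b c : reach E a b -> reach E b c -> reach E a c.
Proof.
elim=> [//|x y z Hxy _ IH] H; apply: reach_step Hxy _; exact: IH.
Qed.

Lemma reach_inv u w : reach E u w -> u = w \/ exists v, E u v /\ reach E v w.
Proof. by case=> [x|x y z H1 H2]; [left | right; exists y]. Qed.

Lemma reach_walk (w : nat -> V) : (forall i, E (w i) (w i.+1)) ->
  forall i j, i <= j -> reach E (w i) (w j).
Proof.
move=> H.
have K : forall k i, reach E (w i) (w (i + k)).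
  elim=> [|k IH] i; first by rewrite addn0; constructor.
  apply: reach_step (H i) _. by rewrite addnS -addSn.
move=> i j Hij. by rewrite -(subnKC Hij).
Qed.

Definition cyc (u : V) := exists v, E u v /\ reach E v u.

Lemma cyc_next u : cyc u -> exists v, E u v /\ cyc v.
Proof.
case=> v [Huv Hvu]. exists v; split => //.
case: (reach_inv Hvu) => [Heq|[y [Hy Hyu]]].
  subst v; exists u; split => //; constructor.
exists y; split => //. apply: reach_trans Hyu _. apply: reach_step Huv _.
constructor.
Qed.

Lemma nontriv_cyc u : ~ in_trivial_scc E u -> cyc u.
Proof.
move=> H. case: (boolP (E u u)) => Huu.
  by exists u; split => //; constructor.
apply: NNPP => Hc. apply: H; split => // w [Huw Hwu].
case: (reach_inv Huw) => [//|[y [Hy Hyw]]].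
exfalso; apply: Hc; exists y; split => //. exact: reach_trans Hyw Hwu.
Qed.

Lemma walk_exists vs l : entryway E vs l ->
  exists w : nat -> V, (forall i, i <= l -> w i = vs i) /\
                       forall i, E (w i) (w i.+1).
Proof.
case=> He Ht Hn. have Hc := nontriv_cyc Hn.
have Hg : forall u, {v | cyc u -> E u v /\ cyc v}.
  move=> u; apply: constructive_indefinite_description.
  case: (classic (cyc u)) => Hu.
    case: (cyc_next Hu) => v [H1 H2]; by exists v.
  by exists u => /Hu.
pose g := fun u => proj1_sig (Hg u).
have Hgp : forall u, cyc u -> E u (g u) /\ cyc (g u) := fun u => proj2_sig (Hg u).
have Hit : forall k, cyc (iter k g (vs l)).
  elim=> [|k IH] //=; exact: (Hgp _ IH).2.
exists (fun i => if i <= l then vs i else iter (i - l) g (vs l)); split.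
  by move=> i ->.
move=> i /=. case: (ltnP i l) => Hil.
  rewrite (ltnW Hil). exact: He.
rewrite (subSn Hil) /=.
have -> : (if i <= l then vs i else iter (i - l) g (vs l)) = iter (i - l) g (vs l).
  case: ifP => // Hil'. have -> : i = l by apply/eqP; rewrite eqn_leq Hil' Hil.
  by rewrite subnn.
exact: (Hgp _ (Hit _)).1.
Qed.

End Reach.

Lemma core (t t' : term) V (E : V -> V -> bool) vs l L x :
  uniq (leaves t) -> leaves t' = leaves t -> satisfies E t t' ->
  (forall y, y \in leaves t -> (dep t y <= L) || (dep t' y <= L) ->
     dep t y = dep t' y) ->
  x \in leaves t -> dep t' x = L.+1 -> L.+1 < dep t x ->
  entryway E vs l -> L.+1 < l -> False.
Proof.
move=> U Ht' Hsat Hagree Hx Hx' Hxt Hent Hl.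
have U' : uniq (leaves t') by rewrite Ht'.
case: (walk_exists Hent) => w [Hw1 Hw2].
have Hev : eval E (fun y => Some (w (dep t' y))) t' =
           Some (w (dep t' (leftmost t'))).
  apply: (eval_hom (f := fun y => w (dep t' y))) => u v Huv.
  by rewrite (dep_edge U' Huv).
rewrite -Hsat in Hev. case: (eval_some Hev) => _ Hedges.
have Hxl : x != leftmost t.
  apply/negP => /eqP Hxe. move: Hxt; by rewrite Hxe dep_lm.
case: (parent U Hx Hxl) => p Hp.
have Hdp := dep_edge U Hp.
case/andP: (edge_in Hp) => Hpl _.
have Hd'p : L < dep t' p.
  rewrite ltnNge; apply/negP => Hle.
  have := Hagree p Hpl; rewrite Hle orbT => /(_ isT) Heq.
  move: Hxt; rewrite Hdp Heq ltnS. by rewrite ltnNge Hle.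
case: (Hedges p x Hp) => xu [xv [Hau Hav Hexy]].
case: Hau => Hau; case: Hav => Hav; subst xu xv.
rewrite Hx' in Hexy.
case: Hent => _ Htr _. have [Hsc Hloop] := Htr L.+1 Hl.
rewrite (Hw1 L.+1) in Hexy; last exact: ltnW Hl.
have Hr : reach E (w L.+1) (w (dep t' p)) := reach_walk Hw2 Hd'p.
rewrite (Hw1 L.+1) in Hr; last exact: ltnW Hl.
have Hback : reach E (w (dep t' p)) (vs L.+1).
  apply: reach_step Hexy _; constructor.
have Heq := Hsc _ (conj Hr Hback).
rewrite Heq in Hexy. by rewrite Hexy in Hloop.
Qed.

Lemma leaves_size t : 0 < size (leaves t).
Proof. by case: (leaves_lm t) => r ->. Qed.

Lemma dep_inj t t' : uniq (leaves t) -> leaves t' = leaves t ->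
  (forall x, x \in leaves t -> dep t x = dep t' x) -> t = t'.
Proof.
elim: t t' => [i|t1 IH1 t2 IH2] [j|t1' t2'] U Hl Hd.
- by case: Hl => ->.
- have := congr1 size Hl; rewrite /= size_cat.
  have := leaves_size t1'; have := leaves_size t2'. lia.
- have := congr1 size Hl; rewrite /= size_cat.
  have := leaves_size t1; have := leaves_size t2. lia.
case/uniq_app: (U) => U1 U2 D.
have U' : uniq (leaves (App t1' t2')) by rewrite Hl.
case/uniq_app: (U') => U1' U2' D'.
rewrite /= in Hl.
set y := leftmost t2. set y' := leftmost t2'.
have Hs : forall z, z \in leaves t1 ++ leaves t2 ->
    (if z \in leaves t2 then (dep t2 z).+1 else dep t1 z) =
    (if z \in leaves t2' then (dep t2' z).+1 else dep t1' z).
  move=> z Hz; exact: (Hd z Hz).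
have A : y' \in leaves t2 -> y' = y.
  move=> H. have := Hs y'; rewrite mem_cat H orbT lm_in (dep_lm U2') => /(_ isT).
  case => /eqP. by rewrite dep0 // => /eqP.
have B : y \in leaves t2' -> y = y'.
  move=> H. have := Hs y; rewrite mem_cat lm_in orbT H (dep_lm U2) => /(_ isT).
  case => /esym/eqP. by rewrite dep0 // => /eqP.
have Iy : index y (leaves t1 ++ leaves t2) = size (leaves t1).
  rewrite index_cat. have : y \notin leaves t1.
    apply/negP => H; move: (D _ H); by rewrite lm_in.
  move/negbTE => ->. case: (leaves_lm t2) => r ->. by rewrite /= eqxx addn0.
have Iy' : index y' (leaves t1 ++ leaves t2) = size (leaves t1').
  rewrite -Hl index_cat. have : y' \notin leaves t1'.
    apply/negP => H; move: (D' _ H); by rewrite lm_in.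
  move/negbTE => ->. case: (leaves_lm t2') => r ->. by rewrite /= eqxx addn0.
have Hsz : size (leaves t1) = size (leaves t1').
  case: (boolP (y' \in leaves t2)) => H1.
    by rewrite -Iy -Iy' (A H1).
  case: (boolP (y \in leaves t2')) => H2.
    by rewrite -Iy -Iy' (B H2).
  have Hy'1 : y' \in leaves t1.
    have : y' \in leaves t1 ++ leaves t2 by rewrite -Hl mem_cat lm_in orbT.
    by rewrite mem_cat (negbTE H1) orbF.
  have Hy1 : y \in leaves t1'.
    have : y \in leaves t1' ++ leaves t2' by rewrite Hl mem_cat lm_in orbT.
    by rewrite mem_cat (negbTE H2) orbF.
  have L1 : size (leaves t1') < size (leaves t1).
    by rewrite -Iy' index_cat Hy'1 index_mem.
  have L2 : size (leaves t1) < size (leaves t1').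
    by rewrite -Iy -Hl index_cat Hy1 index_mem.
  by move: L1; rewrite ltnNge (ltnW L2).
have /eqP := Hl. rewrite eqseq_cat // => /andP [/eqP E1 /eqP E2].
have e1 : t1 = t1'.
  apply: (IH1 t1' U1 E1) => z Hz. have Hz2 := negbTE (D _ Hz).
  have := Hs z; rewrite mem_cat Hz Hz2 E2 Hz2. by move=> /(_ isT).
have e2 : t2 = t2'.
  apply: (IH2 t2' U2 E2) => z Hz.
  have := Hs z; rewrite mem_cat Hz orbT E2 Hz => /(_ isT). by case.
by rewrite e1 e2.
Qed.

Definition Lb n t t' m := all (fun x =>
  ((dep t x <= m) || (dep t' x <= m)) ==> (dep t x == dep t' x)) (iota 1 n).

Lemma Lprop_Lb n t t' m : inB n t -> inB n t' -> Lprop n t t' m <-> Lb n t t' m.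
Proof.
move=> Ht Ht'.
have U : uniq (leaves t) by rewrite Ht iota_uniq.
have U' : uniq (leaves t') by rewrite Ht' iota_uniq.
split.
  move=> H; apply/allP => x Hx; apply/implyP => Hc; apply/eqP.
  apply: (H x Hx).
  - apply: dep_tdepth U _; by rewrite Ht.
  - apply: dep_tdepth U' _; by rewrite Ht'.
  - by apply/orP.
move=> /allP H x Hx k k' Hk Hk' Hor.
have e1 := tdepth_dep U Hk; have e2 := tdepth_dep U' Hk'. subst k k'.
apply/eqP; apply: (implyP (H x Hx)); by apply/orP.
Qed.

Theorem lemma6p7 (n : nat) (t t' : term) (V : Type) (E : V -> V -> bool) :
  inB n t -> inB n t' -> t <> t' -> satisfies E t t' ->
  (exists L, is_L n t t' L) /\
  (forall L, is_L n t t' L ->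
     forall (vs : nat -> V) (l : nat), entryway E vs l -> l <= L.+1).
Proof.
move=> Ht Ht' Hne Hsat.
have U : uniq (leaves t) by rewrite Ht iota_uniq.
have U' : uniq (leaves t') by rewrite Ht' iota_uniq.
have Hl' : leaves t' = leaves t by rewrite Ht Ht'.
split.
  have [x Hx Hd] : exists2 x, x \in iota 1 n & dep t x != dep t' x.
    case: (boolP (has (fun x => dep t x != dep t' x) (iota 1 n))) =>
      [/hasP [x Hx Hd]|Hn]; first by exists x.
    exfalso; apply: Hne; apply: (dep_inj U Hl') => x Hx.
    move/hasPn: Hn => /(_ x). rewrite -Ht => /(_ Hx) /negPn/eqP. done.
  have Hb0 : Lb n t t' 0.
    apply/allP => y Hy; apply/implyP; rewrite !leqn0 => H.
    have Hy1 : y \in leaves t by rewrite Ht.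
    have Hy2 : y \in leaves t' by rewrite Ht'.
    have Hlm : leftmost t = leftmost t' by apply: lm_eq; rewrite Ht Ht'.
    have e1 := dep0 U Hy1; have e2 := dep0 U' Hy2. rewrite -Hlm in e2.
    have E0 : (dep t y == 0) = (dep t' y == 0) by rewrite e1 e2.
    have h1 : dep t y == 0 by case/orP: H => H; [ | rewrite E0].
    have h2 : dep t' y == 0 by rewrite -E0.
    by rewrite (eqP h1) (eqP h2).
  have Hbnd : forall m, Lb n t t' m -> m <= dep t x.
    move=> m /allP /(_ x Hx) /implyP H. apply: ltnW.
    rewrite ltnNge; apply/negP => Hle. have := H ltac:(by rewrite Hle).
    by rewrite (negbTE Hd).
  case: (ex_maxnP (ex_intro _ 0 Hb0) Hbnd) => i Hi Hmax.
  exists i; split; first exact: (proj2 (Lprop_Lb _ Ht Ht') Hi).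
  move=> m' H; apply: Hmax; exact: (proj1 (Lprop_Lb _ Ht Ht') H).
move=> L [HL HLmax] vs l Hent. rewrite leqNgt; apply/negP => Hl.
have HnL1 : ~~ Lb n t t' L.+1.
  apply/negP => H. have := HLmax _ ((Lprop_Lb _ Ht Ht').2 H). by rewrite ltnn.
move/allPn: HnL1 => [x Hx]. rewrite negb_imply => /andP [Hc /eqP Hd].
have HbL := (Lprop_Lb _ Ht Ht').1 HL.
have Hag : forall y, y \in leaves t -> (dep t y <= L) || (dep t' y <= L) ->
     dep t y = dep t' y.
  move=> y Hy Hc'. move/allP: HbL => /(_ y). rewrite -Ht => /(_ Hy) /implyP.
  by move=> /(_ Hc') /eqP.
have Hx1 : x \in leaves t by rewrite Ht.
have Hgt1 : L < dep t x.
  rewrite ltnNge; apply/negP => h. by have := Hag x Hx1 ltac:(by rewrite h).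
have Hgt2 : L < dep t' x.
  rewrite ltnNge; apply/negP => h. by have := Hag x Hx1 ltac:(by rewrite h orbT).
case/orP: Hc => Hc.
  apply: (@core t' t V E vs l L x U' (esym Hl') (fun a => esym (Hsat a))).
  - move=> y; rewrite Hl' orbC => Hy Hc'. by rewrite (Hag y Hy Hc').
  - by rewrite Hl'.
  - lia.
  - lia.
  - exact: Hent.
  - exact: Hl.
apply: (@core t t' V E vs l L x U Hl' Hsat Hag Hx1); try lia; exact: Hent.
Qed.
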